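(* Let $p>1$ and let ${\bf a}=(a_n)_{n\in\mathbb N}$ be a good weight for the dominated weighted ergodic theorem in $L^p$. Then the Nörlund matrix $N_{\bf a}$ is bounded on $\ell^p(\mathbb N)$. Moreover, for every non-increasing sequence $(b_n)_{n\in\mathbb N}$ of nonnegative numbers, with ${\bf c}:=(a_nb_n)_{n\in\mathbb N}$, the Nörlund matrix $N_{\bf c}$ is bounded on $\ell^p(\mathbb N)$.
   Context: For a complex sequence ${\bf a}=(a_n)_{n\in\mathbb N}$ set $A_i:=\sum_{k=0}^i|a_k|$. The Nörlund matrix $N_{\bf a}=(a_{ij})_{i,j\in\mathbb N}$ has entries $a_{ij}=a_{i-j}/A_i$ if $0\le j\le i$ and $A_i>0$, and $a_{ij}=0$ if $j>i$ or $A_i=0$; it is bounded on $\ell^p(\mathbb N)$ if there is $C_p$ with $\|N_{\bf a}u\|_{\ell^p}\le C_p\|u\|_{\ell^p}$ for all finitely supported $u$. (For ${\bf c}$, $A_i$ is replaced by $\sum_{k=0}^i|c_k|$.) The sequence ${\bf a}$ is a good weight for the dominated weighted ergodic theorem in $L^p$ if there is $C>0$ such that for every probability-measure-preserving system $(X,\Sigma,\nu,\tau)$ and every $f\in L^p(\nu)$, $\|\sup_{n\ge0}\frac1{A_n}|\sum_{k=0}^na_kf\circ\tau^k|\|_{L^p(\nu)}\le C\|f\|_{L^p(\nu)}$, with the quotient read as $0$ when $A_n=0$. *)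

(* Defs.v *)
From HB Require Import structures.
From mathcomp Require Import all_boot all_order all_algebra.
From mathcomp Require Import all_classical all_reals all_analysis.
From mathcomp Require Import complex.
Set Implicit Arguments. Unset Strict Implicit. Unset Printing Implicit Defensive.
Import Order.TTheory GRing.Theory Num.Theory.
Local Open Scope ring_scope.
Local Open Scope classical_set_scope.
Local Open Scope complex_scope.

Definition cmod {R : realType} (z : R[i]) : R := Normc.normc z.

Definition Apart {R : realType} (a : nat -> R[i]) (i : nat) : R :=
  \sum_(k < i.+1) cmod (a k).

Definition norlund {R : realType} (a : nat -> R[i]) (u : nat -> R[i])
    (i : nat) : R[i] :=
  if Apart a i == 0 then 0
  else (\sum_(j < i.+1) a (i - j)%N * u j) / (Apart a i)%:C.

Definition lpnorm {R : realType} (p : R) (u : nat -> R[i]) : \bar R :=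
  Lnorm (@counting nat R) p%:E (fun i => (cmod (u i))%:E).

Definition finitely_supported {R : realType} (u : nat -> R[i]) : Prop :=
  exists N : nat, forall n : nat, (N <= n)%N -> u n = 0.

Definition norlund_bounded {R : realType} (p : R) (a : nat -> R[i]) : Prop :=
  exists C : R, forall u : nat -> R[i], finitely_supported u ->
    (lpnorm p (norlund a u) <= C%:E * lpnorm p u)%E.

Definition measure_preserving {d} {T : measurableType d} {R : realType}
    (nu : probability T R) (tau : T -> T) : Prop :=
  measurable_fun [set: T] tau /\
  forall A : set T, measurable A -> nu (tau @^-1` A) = nu A.

Definition cmeasurable {d} {T : measurableType d} {R : realType}
    (f : T -> R[i]) : Prop :=
  measurable_fun [set: T] (fun x => complex.Re (f x)) /\
  measurable_fun [set: T] (fun x => complex.Im (f x)).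

Definition in_Lp {d} {T : measurableType d} {R : realType}
    (nu : probability T R) (p : R) (f : T -> R[i]) : Prop :=
  cmeasurable f /\ (Lnorm nu p%:E (fun x => (cmod (f x))%:E) < +oo)%E.

Definition wavg {T : Type} {R : realType} (a : nat -> R[i]) (f : T -> R[i])
    (tau : T -> T) (n : nat) (x : T) : R :=
  if Apart a n == 0 then 0
  else cmod (\sum_(k < n.+1) a k * f (iter k tau x)) / Apart a n.

Definition maxfun {T : Type} {R : realType} (a : nat -> R[i]) (f : T -> R[i])
    (tau : T -> T) (x : T) : \bar R :=
  ereal_sup (range (fun n : nat => (wavg a f tau n x)%:E)).

Definition good_weight {R : realType} (p : R) (a : nat -> R[i]) : Prop :=
  exists C : R, 0 < C /\
    forall (d : measure_display) (T : measurableType d)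
           (nu : probability T R) (tau : T -> T),
      measure_preserving nu tau ->
      forall f : T -> R[i], in_Lp nu p f ->
        (Lnorm nu p%:E (maxfun a f tau)
           <= C%:E * Lnorm nu p%:E (fun x => (cmod (f x))%:E))%E.

(* Main.v *)
Require Import Defs.
From HB Require Import structures.
From mathcomp Require Import all_boot all_order all_algebra.
From mathcomp Require Import all_classical all_reals all_analysis.
From mathcomp Require Import complex ring.
Import Order.TTheory GRing.Theory Num.Theory.
Local Open Scope ring_scope.
Local Open Scope complex_scope.

Local Open Scope classical_set_scope.
Section unif.
Context {R : realType} (M' : nat).
Local Open Scope ereal_scope.

Lemma invM_ge0 : (0 <= M'.+1%:R^-1 :> R)%R.
Proof. by rewrite invr_ge0. Qed.

Definition unif := mscale (NngNum invM_ge0) (msum (fun k : nat => @dirac _ nat k R) M'.+1).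

Lemma unifE (A : set nat) : unif A = (M'.+1%:R^-1)%:E * \sum_(k < M'.+1) (@dirac _ nat k R) A.
Proof. by []. Qed.

Lemma unifT : unif setT = 1.
Proof.
rewrite unifE (eq_bigr (fun=> 1%E)); last by move=> k _; rewrite diracT.
by rewrite sumEFin /= sumr_const card_ord -EFinM mulVf // pnatr_eq0.
Qed.

HB.instance Definition _ := Measure.copy unif (mscale (NngNum invM_ge0) (msum (fun k : nat => @dirac _ nat k R) M'.+1)).
HB.instance Definition _ := Measure_isProbability.Build _ _ _ unif unifT.


Lemma unif_integral (f : nat -> \bar R) : (forall x, 0 <= f x) ->
  \int[unif]_x f x = (M'.+1%:R^-1)%:E * \sum_(k < M'.+1) f k.
Proof.
move=> f0.
have M0 : (0 <= M'.+1%:R^-1 :> R)%R by rewrite invr_ge0.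
rewrite ge0_integral_mscale //= ge0_integral_measure_sum //.
congr (_ * _); apply: eq_bigr => k _.
by rewrite integral_dirac //= diracT mul1e.
Qed.
End unif.

Lemma abel_id (V : comRingType) (x b : nat -> V) i :
  \sum_(k < i.+1) x k * b k =
  b i * \sum_(k < i.+1) x k + \sum_(k < i) (b k - b k.+1) * \sum_(j < k.+1) x j.
Proof.
elim: i => [|i IH].
  by rewrite big_ord0 !big_ord1 addr0 mulrC.
rewrite big_ord_recr /= IH [in RHS]big_ord_recr /= [X in _ = _ + X]big_ord_recr /=.
ring.
Qed.

Section cm.
Context {R : realType}.

Lemma cmod_ge0 (z : R[i]) : 0 <= cmod z.
Proof. by case: z => a b; rewrite /cmod /= sqrtr_ge0. Qed.

Lemma cmodM (z w : R[i]) : cmod (z * w) = cmod z * cmod w.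
Proof. exact: Normc.normcM. Qed.

Lemma cmodV (z : R[i]) : cmod (z^-1) = (cmod z)^-1.
Proof. exact: Normc.normcV. Qed.

Lemma cmod0 : cmod (0 : R[i]) = 0.
Proof. exact: Normc.normc0. Qed.

Lemma cmod_eq0 (z : R[i]) : cmod z = 0 -> z = 0.
Proof. exact: Normc.eq0_normc. Qed.

Lemma cmodC (r : R) : 0 <= r -> cmod (r%:C) = r.
Proof. by move=> r0; rewrite /cmod /= expr0n /= addr0 sqrtr_sqr ger0_norm. Qed.

Lemma cmodD (z w : R[i]) : cmod (z + w) <= cmod z + cmod w.
Proof. exact: le_normcD. Qed.

Lemma cmod_sum n (F : 'I_n -> R[i]) :
  cmod (\sum_(k < n) F k) <= \sum_(k < n) cmod (F k).
Proof.
elim/big_ind2: _ => //; first by rewrite cmod0.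
by move=> x1 x2 y1 y2 h1 h2; apply: le_trans (cmodD _ _) _; exact: lerD.
Qed.

Lemma abel_bound (x : nat -> R[i]) (al b : nat -> R) (m : R) (i : nat) :
  (forall k, 0 <= b k) -> (forall k, b k.+1 <= b k) ->
  (forall n, (n <= i)%N -> cmod (\sum_(k < n.+1) x k) <= m * \sum_(k < n.+1) al k) ->
  cmod (\sum_(k < i.+1) x k * (b k)%:C) <= m * \sum_(k < i.+1) al k * b k.
Proof.
move=> b0 bdec H.
rewrite (@abel_id R al b) (@abel_id R[i] x (fun k => (b k)%:C)) mulrDr.
apply: le_trans (cmodD _ _) _; apply: lerD.
  rewrite cmodM cmodC // mulrCA; apply: ler_wpM2l => //; exact: H.
rewrite [X in _ <= X]mulr_sumr.
apply: le_trans (cmod_sum _ _) _; apply: ler_sum => k _.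
rewrite -rmorphB /= cmodM cmodC ?subr_ge0 // mulrCA; apply: ler_wpM2l.
  by rewrite subr_ge0.
apply: H; apply: ltnW; exact: ltn_ord.
Qed.
End cm.

Section main.
Context {R : realType}.
Local Open Scope complex_scope.

Definition tauM (M' : nat) (x : nat) : nat := if x == 0%N then M' else x.-1.

Lemma iter_tauM M' k x : (k <= x)%N -> iter k (tauM M') x = (x - k)%N.
Proof.
elim: k => [|k IH] kx; first by rewrite subn0.
rewrite iterS IH ?(ltnW kx) // /tauM.
have -> : (x - k == 0)%N = false by apply/negbTE; rewrite subn_eq0 -ltnNge.
by rewrite subnS.
Qed.

Lemma pointwise (a u : nat -> R[i]) (b : nat -> R) M' i :
  (forall n, 0 <= b n) -> (forall k, b k.+1 <= b k) ->
  ((cmod (norlund (fun n => a n * (b n)%:C) u i))%:E <= maxfun a u (tauM M') i)%E.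
Proof.
move=> b0 bdec.
set mf := maxfun a u (tauM M') i.
have Ag0 (c : nat -> R[i]) n : 0 <= Apart c n.
  by apply: sumr_ge0 => k _; exact: cmod_ge0.
have wge0 n : 0 <= wavg a u (tauM M') n i.
  rewrite /wavg; case: ifPn => // _; apply: divr_ge0; [exact: cmod_ge0|exact: Ag0].
have wle n : ((wavg a u (tauM M') n i)%:E <= mf)%E.
  by apply: ereal_sup_ubound; exists n.
have mf0 : (0 <= mf)%E by apply: le_trans (wle 0%N); rewrite lee_fin.
rewrite /norlund; case: ifPn => [_ | hA]; first by rewrite cmod0.
case Emf: mf => [m| |]; [ | by rewrite leey | by move: mf0; rewrite Emf].
rewrite lee_fin.
have Hm n : wavg a u (tauM M') n i <= m by rewrite -lee_fin -Emf.
have Apos : 0 < Apart (fun n => a n * (b n)%:C) i by rewrite lt_neqAle eq_sym hA Ag0.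
rewrite cmodM cmodV cmodC ?Ag0 // ler_pdivrMr //.
have -> : Apart (fun n => a n * (b n)%:C) i = \sum_(k < i.+1) cmod (a k) * b k.
  by apply: eq_bigr => k _; rewrite cmodM cmodC.
rewrite (reindex_inj rev_ord_inj) /=.
rewrite (eq_bigr (fun k : 'I_i.+1 => (a k * u (i - k)%N) * (b k)%:C)); last first.
  move=> k _; have ki : (k <= i)%N by rewrite -ltnS.
  by rewrite subSS subKn // mulrAC.
apply: (abel_bound (fun k => a k * u (i - k)%N) (fun k => cmod (a k))) => // n ni.
have := Hm n; rewrite /wavg; case: ifPn => [/eqP A0 _ | An].
  have az k : (k < n.+1)%N -> a k = 0.
    move=> kn; apply: cmod_eq0.
    have := @psumr_eq0P _ _ xpredT (fun k : 'I_n.+1 => cmod (a k)) _ A0 (Ordinal kn).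
    by apply => //; move=> j _; exact: cmod_ge0.
  rewrite big1 ?cmod0; last by move=> k _; rewrite az // mul0r.
  by rewrite -/(Apart a n) A0 mulr0.
have Apos' : 0 < Apart a n by rewrite lt_neqAle eq_sym An Ag0.
rewrite ler_pdivrMr //.
rewrite (eq_bigr (fun k : 'I_n.+1 => a k * u (i - k)%N)) //.
move=> k _; rewrite iter_tauM //; apply: leq_trans ni; by rewrite -ltnS.
Qed.

Lemma tauM_pres M' : measure_preserving (@unif R M') (tauM M').
Proof.
split; first by [].
move=> A _; change (@unif R M' (tauM M' @^-1` A) = @unif R M' A); rewrite !unifE; congr (_ * _)%E.
transitivity (\sum_(k < M'.+1) (@dirac _ nat (tauM M' k) R) A)%E.
  by apply: eq_bigr => k _; rewrite !diracE.
rewrite big_ord_recl big_ord_recr /= addeC; congr (_ + _)%E.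
Qed.

Lemma Lnorm_unif M' (p : R) (g : nat -> R) : (forall x, 0 <= g x) ->
  Lnorm (unif M') p%:E (fun x => (g x)%:E) =
  ((M'.+1%:R^-1 * \sum_(x < M'.+1) g x `^ p) `^ p^-1)%:E.
Proof.
move=> g0; rewrite Lnorm.unlock /= unif_integral; try (by move=> x; first [exact: poweR_ge0 | rewrite lee_fin powR_ge0]).
rewrite (eq_bigr (fun x : 'I_M'.+1 => ((g x) `^ p)%:E)); last first.
  by move=> x _; rewrite /= ger0_norm ?g0.
by rewrite sumEFin -EFinM poweR_EFin.
Qed.

Lemma Lnorm_unif_ge M' (p : R) (g : nat -> R) (F : nat -> \bar R) : 0 < p ->
  (forall x, 0 <= g x) -> (forall x, ((g x)%:E <= F x)%E) ->
  (((M'.+1%:R^-1 * \sum_(x < M'.+1) g x `^ p) `^ p^-1)%:E <= Lnorm (unif M') p%:E F)%E.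
Proof.
move=> p0 g0 gF; rewrite Lnorm.unlock /= unif_integral; try (by move=> x; first [exact: poweR_ge0 | rewrite lee_fin powR_ge0]).
rewrite -poweR_EFin EFinM -sumEFin.
apply: gt0_ler_poweR.
- by rewrite invr_ge0 ltW.
- rewrite in_itv /= leey andbT; apply: mule_ge0; first by rewrite lee_fin invr_ge0.
  by apply: sume_ge0 => k _; rewrite lee_fin powR_ge0.
- rewrite in_itv /= leey andbT; apply: mule_ge0; first by rewrite lee_fin invr_ge0.
  by apply: sume_ge0 => k _; exact: poweR_ge0.
apply: lee_wpmul2l; first by rewrite lee_fin invr_ge0.
apply: lee_sum => k _; rewrite -poweR_EFin.
apply: gt0_ler_poweR; first exact: ltW.
- by rewrite in_itv /= leey andbT lee_fin g0.
- by rewrite in_itv /= leey andbT abse_ge0.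
by apply: le_trans (gF k) (lee_abs _).
Qed.


Lemma sum_le_widen (F : nat -> R) m n : (forall x, 0 <= F x) -> (m <= n)%N ->
  \sum_(x < m) F x <= \sum_(x < n) F x.
Proof.
move=> F0 mn; rewrite -!(big_mkord xpredT) (big_cat_nat (leq0n m) mn) /=.
by rewrite lerDl sumr_ge0.
Qed.

Lemma sum_zero_tail (F : nat -> R) N n : (N <= n)%N ->
  (forall x, (N <= x)%N -> F x = 0) -> \sum_(x < n) F x = \sum_(x < N) F x.
Proof.
move=> Nn HF; rewrite -!(big_mkord xpredT) (big_cat_nat (leq0n N) Nn) /=.
rewrite [X in _ + X]big1_seq ?addr0 // => x /andP[_].
by rewrite mem_index_iota => /andP[Nx _]; exact: HF.
Qed.

Lemma series_le (g : nat -> R) B : (forall k, 0 <= g k) ->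
  (forall m, \sum_(k < m) g k <= B) -> (\sum_(k <oo) (g k)%:E <= B%:E)%E.
Proof.
move=> g0 HB.
have h : forall n, (0 <= n)%N -> xpredT n -> (0 <= (g n)%:E)%E by move=> n _ _; rewrite lee_fin.
move: h => /ereal_nondecreasing_series/ereal_nondecreasing_cvgn/cvg_lim -> //.
apply: ge_ereal_sup => _ [m _ <-] /=.
by rewrite big_mkord sumEFin lee_fin.
Qed.

Lemma lpnorm_E (p : R) (v : nat -> R[i]) :
  lpnorm p v = ((\sum_(k <oo) ((cmod (v k)) `^ p)%:E) `^ p^-1)%E.
Proof.
rewrite /lpnorm Lnorm.unlock /=.
have -> : (fun x => (`|cmod (v x)| `^ p)%:E) = (fun x => (cmod (v x) `^ p)%:E :> \bar R).
  by apply/funext => x; rewrite ger0_norm ?cmod_ge0.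
rewrite ge0_integral_count //.
by move=> k; rewrite lee_fin powR_ge0.
Qed.


Lemma transfer (p : R) (a w : nat -> R[i]) : 1 < p -> good_weight p a ->
  (forall u M' x, ((cmod (norlund w u x))%:E <= maxfun a u (tauM M') x)%E) ->
  norlund_bounded p w.
Proof.
move=> p1 [C [C0 HC]] Hpt; exists C => u [N HN].
have p0 : 0 < p by apply: lt_trans p1.
have q0 : 0 < p^-1 by rewrite invr_gt0.
have g0 x : 0 <= cmod (norlund w u x) by exact: cmod_ge0.
have h0 x : 0 <= cmod (u x) by exact: cmod_ge0.
pose U := \sum_(x < N) cmod (u x) `^ p.
have U0 : 0 <= U by apply: sumr_ge0 => x _; exact: powR_ge0.
have htail M : (N <= M)%N -> \sum_(x < M) cmod (u x) `^ p = U.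
  move=> NM; apply: (@sum_zero_tail (fun x => cmod (u x) `^ p)) => // x Nx.
  by rewrite HN // cmod0 powR0 // gt_eqF.
have stepA M' : (N <= M'.+1)%N ->
    (\sum_(x < M'.+1) cmod (norlund w u x) `^ p) `^ p^-1 <= C * U `^ p^-1.
  move=> NM.
  have inLp : in_Lp (unif M') p u.
    split; first by split.
    by rewrite (Lnorm_unif M' p _ h0) ltry.
  have := HC _ _ (unif M') (tauM M') (tauM_pres M') u inLp.
  rewrite (Lnorm_unif M' p _ h0) htail //.
  move/(le_trans (Lnorm_unif_ge M' _ _ _ p0 g0 (Hpt u M'))).
  rewrite -EFinM lee_fin.
  have Mi0 : 0 <= (M'.+1%:R^-1 : R) by rewrite invr_ge0.
  rewrite !powRM //; last by apply: sumr_ge0 => x _; exact: powR_ge0.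
  by rewrite mulrCA ler_pM2l // powR_gt0 // invr_gt0 ltr0Sn.
have stepB m : \sum_(x < m) cmod (norlund w u x) `^ p <= (C * U `^ p^-1) `^ p.
  have NM : (N <= (maxn m N).+1)%N by rewrite ltnW // ltnS leq_maxr.
  apply: le_trans (@sum_le_widen (fun x => cmod (norlund w u x) `^ p) _ _ _ (leq_trans (leq_maxl m N) (leqnSn _))) _.
    by move=> x; exact: powR_ge0.
  have S0 : 0 <= \sum_(x < (maxn m N).+1) cmod (norlund w u x) `^ p.
    by apply: sumr_ge0 => x _; exact: powR_ge0.
  rewrite -[X in X <= _](powRr1 S0) -(mulVf (lt0r_neq0 p0)) powRrM.
  apply: ge0_ler_powR; [exact: ltW | by rewrite nnegrE powR_ge0
    | by rewrite nnegrE mulr_ge0 ?powR_ge0 ?ltW | exact: (stepA _ NM)].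
have Hser : (\sum_(k <oo) (cmod (norlund w u k) `^ p)%:E <= ((C * U `^ p^-1) `^ p)%:E)%E.
  apply: series_le; [move=> k; exact: powR_ge0 | exact: stepB].
rewrite (lpnorm_E p (norlund w u)) (lpnorm_E p u).
have Kge0 : 0 <= C * U `^ p^-1 by rewrite mulr_ge0 ?powR_ge0 ?ltW.
apply: (le_trans (gt0_ler_poweR (ltW q0) _ _ Hser)).
- rewrite in_itv /= leey andbT; apply: nneseries_ge0 => k _ _; rewrite lee_fin powR_ge0 //.
- by rewrite in_itv /= leey andbT lee_fin powR_ge0.
rewrite poweR_EFin -powRrM mulfV ?gt_eqF // powRr1 //.
rewrite EFinM; apply: lee_wpmul2l; first by rewrite lee_fin ltW.
rewrite -poweR_EFin; apply: gt0_ler_poweR; first exact: ltW.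
- by rewrite in_itv /= leey andbT lee_fin.
- rewrite in_itv /= leey andbT; apply: nneseries_ge0 => k _ _; rewrite lee_fin powR_ge0 //.
rewrite /U -sumEFin -(big_mkord xpredT (fun x => ((cmod (u x)) `^ p)%:E)).
by apply: nneseries_lim_ge => k _ _; rewrite lee_fin powR_ge0.
Qed.

End main.

Close Scope classical_set_scope.
Close Scope complex_scope.

Theorem mainTheorem3 (R : realType) (p : R) (a : nat -> R[i]) :
  1 < p -> good_weight p a ->
  norlund_bounded p a /\
  (forall b : nat -> R,
     (forall n : nat, 0 <= b n) ->
     {homo b : m n / (m <= n)%N >-> n <= m} ->
     norlund_bounded p (fun n : nat => a n * ((b n)%:C)%C)).
Proof.
move=> p1 ga; split.
  apply: (@transfer _ p a a p1 ga) => u M' x.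
  have := @pointwise R a u (fun=> 1) M' x (fun=> ler01) (fun=> lexx _).
  have -> // : (fun n => a n * ((fun=> (1:R)) n)%:C)%C = a.
  by apply/funext => n; rewrite /= mulr1.
move=> b b0 bh; apply: (@transfer _ p a _ p1 ga) => u M' x; apply: pointwise => // k.
by apply: bh; exact: leqnSn.
Qed.
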